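(* Let $\beta>0$, $\lambda_1,\dots,\lambda_d\in\mathbb R$, and let $p=(p_1,\dots,p_d)$, with $p_k\ge0$ and $\sum_kp_k=1$, solve \[ \dot p_k=2p_k\tanh(\beta M)(\lambda_k-M),\qquad M=\sum_{l=1}^d\lambda_lp_l. \] Let $I_0:=\{k:p_k(0)>0\}$, $\lambda_+:=\max_{k\in I_0}\lambda_k$, $\lambda_-:=\min_{k\in I_0}\lambda_k$, $I_\pm:=\{k\in I_0:\lambda_k=\lambda_\pm\}$. Then: (1) If $M(0)>0$, then $p_k(t)\to0$ for $k\notin I_+$, $p_k(t)\to p_k(0)/\sum_{j\in I_+}p_j(0)$ for $k\in I_+$, and $M(t)\to\lambda_+$. (2) If $M(0)<0$, then $p_k(t)\to0$ for $k\notin I_-$, $p_k(t)\to p_k(0)/\sum_{j\in I_-}p_j(0)$ for $k\in I_-$, and $M(t)\to\lambda_-$. (3) If $M(0)=0$, then $p_k(t)\equiv p_k(0)$ for all $t\ge0$ and $k\in[d]$.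
   Context: This is the reduced dynamics on the balanced bipolar manifold of the symmetric self-attention system with symmetric interaction matrix having eigenvalues $\lambda_k$; limits are as $t\to\infty$. *)

(* Defs.v *)
From HB Require Import structures.
From mathcomp Require Import all_boot all_order all_algebra.
From mathcomp Require Import all_classical all_reals all_analysis.
Set Implicit Arguments. Unset Strict Implicit. Unset Printing Implicit Defensive.
Import Order.TTheory GRing.Theory Num.Theory.
Import numFieldNormedType.Exports.
Local Open Scope ring_scope.

Definition tanh {R : realType} (x : R) : R :=
  (expR x - expR (- x)) / (expR x + expR (- x)).

Definition magn {R : realType} {d : nat} (lam : 'I_d -> R) (q : 'I_d -> R) : R :=
  \sum_(l < d) lam l * q l.

Definition I0 {R : realType} {d : nat} (q : 'I_d -> R) : {set 'I_d} :=
  [set k : 'I_d | 0 < q k].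

(* lambda_+ = max_{k in I_0} lambda_k, lambda_- = min_{k in I_0} lambda_k
   (max/min of a finite set of reals, written as sup/inf of the image set) *)
Definition lam_plus {R : realType} {d : nat} (lam : 'I_d -> R) (q : 'I_d -> R) : R :=
  sup (lam @` [set k : 'I_d | k \in I0 q])%classic.
Definition lam_minus {R : realType} {d : nat} (lam : 'I_d -> R) (q : 'I_d -> R) : R :=
  inf (lam @` [set k : 'I_d | k \in I0 q])%classic.

Definition Iplus {R : realType} {d : nat} (lam : 'I_d -> R) (q : 'I_d -> R) : {set 'I_d} :=
  [set k in I0 q | lam k == lam_plus lam q].
Definition Iminus {R : realType} {d : nat} (lam : 'I_d -> R) (q : 'I_d -> R) : {set 'I_d} :=
  [set k in I0 q | lam k == lam_minus lam q].

(* Main.v *)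
Require Import Defs.
From HB Require Import structures.
From mathcomp Require Import all_boot all_order all_algebra.
From mathcomp Require Import all_classical all_reals all_analysis.
From mathcomp Require Import ring lra.
Import Order.TTheory GRing.Theory Num.Theory.
Import numFieldNormedType.Exports.
Local Open Scope classical_set_scope.
Local Open Scope ring_scope.

Set Implicit Arguments. Unset Strict Implicit. Unset Printing Implicit Defensive.

Section Tanh.
Context {R : realType}.

Lemma tanhN (x : R) : tanh (- x) = - tanh x.
Proof. by rewrite /tanh opprK [expR (- x) + expR x]addrC -[expR (- x) - expR x]opprB mulNr. Qed.

Lemma tanh_le1 (x : R) : `|tanh x| <= 1.
Proof.
rewrite /tanh normrM normfV.
have u0 := expR_gt0 x; have v0 := expR_gt0 (- x).
rewrite (gtr0_norm (addr_gt0 u0 v0)) ler_pdivrMr ?addr_gt0 // mul1r.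
rewrite ler_norml; apply/andP; split; lra.
Qed.

Lemma tanh_mono (x y : R) : x <= y -> tanh x <= tanh y.
Proof.
move=> xy; rewrite /tanh.
have u0 := expR_gt0 x; have v0 := expR_gt0 (- x).
have u1 := expR_gt0 y; have v1 := expR_gt0 (- y).
rewrite ler_pdivrMr ?addr_gt0 // mulrAC ler_pdivlMr ?addr_gt0 //.
have h : expR x * expR (- y) <= expR y * expR (- x).
  by rewrite -!expRD ler_expR; lra.
nra.
Qed.

Lemma tanh0 : tanh (0 : R) = 0.
Proof. by rewrite /tanh oppr0 subrr mul0r. Qed.

Lemma tanh_gt0 (x : R) : 0 < x -> 0 < tanh x.
Proof.
move=> x0; rewrite /tanh; apply: divr_gt0; last by rewrite addr_gt0 ?expR_gt0.
rewrite subr_gt0 ltr_expR; lra.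
Qed.

Lemma tanh_ge0 (x : R) : 0 <= x -> 0 <= tanh x.
Proof. by move=> x0; rewrite -tanh0 tanh_mono. Qed.

Lemma mul_tanh_ge0 (x : R) : 0 <= x * tanh x.
Proof.
have [x0|x0] := leP 0 x; first by rewrite mulr_ge0 // tanh_ge0.
rewrite -mulrNN -tanhN mulr_ge0 // ?tanh_ge0; lra.
Qed.

Lemma tanh_le2x (x : R) : 0 <= x -> tanh x <= 2 * x.
Proof.
move=> x0; rewrite /tanh.
have u0 := expR_gt0 x; have v0 := expR_gt0 (- x).
rewrite ler_pdivrMr ?addr_gt0 //.
have h1 : expR x * expR (- x) = 1 by rewrite -expRD subrr expR0.
have h2 : 1 + (- (2 * x)) <= expR (- x) * expR (- x).
  by rewrite -expRD; have := expR_ge1Dx (- (2 * x)); congr (_ <= expR _); lra.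
nra.
Qed.

Lemma mul_tanh_le (x : R) : x * tanh x <= 2 * x ^+ 2.
Proof.
have [x0|x0] := leP 0 x.
  by have := tanh_le2x x0; nra.
have h : 0 <= - x by lra.
have := tanh_le2x h; rewrite tanhN; nra.
Qed.

End Tanh.

Section Good.
Context {R : realType}.
Definition good (f df : R -> R) :=
  (f x @[x --> 0^'+] --> f 0) /\ (forall t : R, 0 < t -> is_derive t 1 f (df t)).

Lemma good_cont f df : good f df -> {within `[0, +oo[, continuous f}.
Proof.
move=> [f0 fd]; apply/continuous_within_itvcyP; split => // x.
rewrite in_itv /= andbT => x0.
have [/derivable1_diffP/differentiable_continuous] := fd x x0; done.
Qed.

Lemma good_mono f df : good f df -> (forall t, 0 < t -> 0 <= df t) ->
  forall x y, 0 <= x -> x <= y -> f x <= f y.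
Proof.
move=> gf dfp x y x0 xy.
apply: (@ger0_derive1_ndecry _ f 0) => //.
- by move=> z; rewrite in_itv /= andbT => z0; have [] := gf.2 z z0.
- move=> z; rewrite in_itv /= andbT => z0.
  by rewrite derive1E (@derive_val _ _ _ _ _ _ _ (gf.2 z z0)); exact: dfp.
- exact: good_cont gf.
Qed.

Lemma good_deriv (f df : R -> R) : (forall t : R, 0 <= t -> is_derive t 1 f (df t)) -> good f df.
Proof.
move=> fd; split; last by move=> t t0; apply: fd; rewrite ltW.
apply: cvg_at_right_filter.
have [/derivable1_diffP/differentiable_continuous] := fd 0 (lexx 0); done.
Qed.

Lemma good_mul f df g dg : good f df -> good g dg ->
  good (fun t => f t * g t) (fun t => f t * dg t + g t * df t).
Proof.
move=> [f0 fd] [g0 gd]; split; first exact: cvgM.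
move=> t t0; exact: (is_deriveM (fd t t0) (gd t t0)).
Qed.

Lemma good_add f df g dg : good f df -> good g dg ->
  good (fun t => f t + g t) (fun t => df t + dg t).
Proof.
move=> [f0 fd] [g0 gd]; split; first exact: cvgD.
move=> t t0; exact: (is_deriveD (fd t t0) (gd t t0)).
Qed.

Lemma good_cst c : good (fun _ => c) (fun _ => 0).
Proof. by apply: good_deriv => t _; exact: is_derive_cst. Qed.

Lemma good_scale c f df : good f df -> good (fun t => c * f t) (fun t => c * df t).
Proof.
move=> gf; have := good_mul (good_cst c) gf.
by congr good; apply: funext => t; rewrite mulr0 addr0.
Qed.

Lemma good_exp c : good (fun t => expR (c * t)) (fun t => c * expR (c * t)).
Proof.
apply: good_deriv => t _.
have h : is_derive t 1 (fun s : R => c * s) c.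
  have := @is_deriveZ R R R id c t 1 1 (is_derive_id t 1).
  by move=> H; apply: (is_derive_eq H); rewrite /GRing.scale /= mulr1.
have := is_derive1_comp (is_derive_expR (c * t)) h.
by rewrite mulrC.
Qed.

Lemma good_inv (f df : R -> R) : (forall t, 0 <= t -> f t != 0) -> good f df ->
  good (fun t => (f t)^-1) (fun t => - df t / (f t) ^+ 2).
Proof.
move=> fn0 [f0 fd]; split.
  by apply: cvgV => //; apply: fn0.
move=> t t0; have := is_deriveV (fn0 t (ltW t0)) (fd t t0).
by move=> H; apply: (is_derive_eq H); rewrite /GRing.scale /= [LHS]mulrC mulrN mulNr.
Qed.

Lemma good_sum n (F dF : 'I_n -> R -> R) :
  (forall i, good (F i) (dF i)) ->
  good (fun t => \sum_(i < n) F i t) (fun t => \sum_(i < n) dF i t).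
Proof.
move=> gF; split.
  apply: (@cvg_big _ _ +%R 0 xpredT add_continuous) => // i _; exact: (gF i).1.
move=> t t0.
have := @is_derive_sum R R R n F t 1 (fun i => dF i t) (fun i => (gF i).2 t t0).
by rewrite fct_sumE.
Qed.

End Good.

Lemma cvg_pinfty_ext {R : realType} (f g : R -> R) (l : R) :
  (forall t, 0 <= t -> f t = g t) -> g t @[t --> +oo] --> l -> f t @[t --> +oo] --> l.
Proof.
move=> fg; apply: cvg_trans; apply: near_eq_cvg.
near=> t; apply/esym/fg.
near: t; apply: nbhs_pinfty_ge; exact: num_real.
Unshelve. all: by end_near.
Qed.

Lemma lim0 {R : realType} (f : R -> R) (C del : R) : 0 < del ->
  (forall t, 0 <= t -> 0 <= f t) ->
  (forall t, 0 <= t -> f t * expR (del * t) <= C) ->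
  f t @[t --> +oo] --> 0.
Proof.
move=> d0 f0 fC; apply/cvgrPdist_le => e e0.
near=> t.
have t0 : 0 < t by near: t; apply: nbhs_pinfty_gt; exact: num_real.
have tb : C / (del * e) < t by near: t; apply: nbhs_pinfty_gt; exact: num_real.
rewrite sub0r normrN ger0_norm ?f0 ?ltW //.
have h0 := fC t (ltW t0); have h1 := expR_ge1Dx (del * t).
have ft0 := f0 t (ltW t0).
have h2 : f t * (del * t) <= C by nra.
have h3 : C < e * (del * t).
  by move: tb; rewrite ltr_pdivrMr ?mulr_gt0 //; lra.
have dt : 0 < del * t by rewrite mulr_gt0.
by rewrite -(ltr_pM2r dt); lra.
Unshelve. all: by end_near.
Qed.

Lemma exists_max {R : realType} {d : nat} (lam q : 'I_d -> R) (j0 : 'I_d) :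
  j0 \in I0 q -> exists2 j, j \in I0 q & forall k, k \in I0 q -> lam k <= lam j.
Proof.
move=> hj0.
case: (@arg_maxP _ _ _ j0 (mem (I0 q)) lam hj0) => j hj hmax.
by exists j => // k hk; apply: hmax.
Qed.

Lemma lam_plus_max {R : realType} {d : nat} (lam q : 'I_d -> R) (j : 'I_d) :
  j \in I0 q -> (forall k, k \in I0 q -> lam k <= lam j) -> lam_plus lam q = lam j.
Proof.
move=> hj hmax; rewrite /lam_plus.
have ub : ubound (lam @` [set k | k \in I0 q]) (lam j).
  by move=> x [k /= hk <-]; apply: hmax.
have ne : (lam @` [set k | k \in I0 q]) !=set0 by exists (lam j), j.
apply/eqP; rewrite eq_le ge_sup //=.
apply: (sup_upper_bound (conj ne (ex_intro _ _ ub))).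
by exists j.
Qed.

Lemma lam_minus_plus {R : realType} {d : nat} (lam q : 'I_d -> R) :
  lam_minus lam q = - lam_plus (fun k => - lam k) q.
Proof. by rewrite /lam_minus /inf /lam_plus image_comp. Qed.

Lemma Iminus_plus {R : realType} {d : nat} (lam q : 'I_d -> R) :
  Iminus lam q = Iplus (fun k => - lam k) q.
Proof.
apply/setP => k; rewrite !inE lam_minus_plus.
by rewrite eqr_oppLR.
Qed.

Lemma magnN {R : realType} {d : nat} (lam q : 'I_d -> R) :
  magn (fun k => - lam k) q = - magn lam q.
Proof. by rewrite /magn -sumrN; apply: eq_bigr => i _; rewrite mulNr. Qed.

Lemma good_le0 {R : realType} (f df : R -> R) : good f df -> (forall t, 0 < t -> df t <= 0) ->
  forall t, 0 <= t -> f t <= f 0.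
Proof.
move=> gf h t t0.
have := good_mono (good_scale (-1) gf) _ (lexx 0) t0.
by move=> H; have {H} := H (fun s s0 => ltac:(have := h s s0; lra)); lra.
Qed.

Lemma good_ge0 {R : realType} (f df : R -> R) : good f df -> (forall t, 0 < t -> 0 <= df t) ->
  forall t, 0 <= t -> f 0 <= f t.
Proof. by move=> gf h t t0; apply: (good_mono gf h (lexx 0) t0). Qed.

Section Main.
Variables (R : realType) (d : nat) (beta : R) (lam : 'I_d -> R) (p : R -> 'I_d -> R).
Hypothesis hb : 0 < beta.
Hypothesis hp0 : forall t : R, 0 <= t -> forall k : 'I_d, 0 <= p t k.
Hypothesis hp1 : forall t : R, 0 <= t -> \sum_(k < d) p t k = 1.
Hypothesis hc : forall k : 'I_d, p s k @[s --> 0^'+] --> p 0 k.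
Hypothesis hd : forall t : R, 0 < t -> forall k : 'I_d,
     is_derive t 1 (fun s => p s k)
       (2 * p t k * tanh (beta * magn lam (p t)) * (lam k - magn lam (p t))).

Let M t := magn lam (p t).
Let th t := tanh (beta * M t).
Let a k t := 2 * th t * (lam k - M t).
Let Lam := \sum_(k < d) `|lam k|.
Let K := 4 * Lam.
Let V t := \sum_(l < d) p t l * (lam l - M t) ^+ 2.

Lemma gp k : good (fun t => p t k) (fun t => p t k * a k t).
Proof.
split; first exact: hc.
move=> t t0; apply: is_derive_eq (hd t0 k) _.
rewrite /a /th /M; ring.
Qed.

Lemma gM : good M (fun t => \sum_(l < d) lam l * (p t l * a l t)).
Proof.
apply: (good_sum (F := fun l t => lam l * p t l)) => l.
exact: good_scale (gp l).
Qed.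

Lemma p_le1 t k : 0 <= t -> p t k <= 1.
Proof.
move=> t0; rewrite -(hp1 t0) (bigD1 k) //= lerDl.
by apply: sumr_ge0 => i _; apply: hp0.
Qed.

Lemma lam_le k : `|lam k| <= Lam.
Proof.
by rewrite /Lam (bigD1 k) //= lerDl; apply: sumr_ge0 => i _.
Qed.

Lemma Lam_ge0 : 0 <= Lam.
Proof. by apply: sumr_ge0 => i _. Qed.

Lemma M_le t : 0 <= t -> `|M t| <= Lam.
Proof.
move=> t0; rewrite /M /magn.
apply: (le_trans (ler_norm_sum _ _ _)).
apply: (@le_trans _ _ (\sum_(i < d) Lam * p t i)).
  apply: ler_sum => i _; rewrite normrM (ger0_norm (hp0 t0 i)).
  by rewrite ler_wpM2r ?hp0 ?lam_le.
by rewrite -mulr_sumr hp1 // mulr1.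
Qed.

Lemma a_le k t : 0 <= t -> `|a k t| <= K.
Proof.
move=> t0; rewrite /a /th /K.
have h2 : `|lam k - M t| <= 2 * Lam.
  by apply: (le_trans (ler_normB _ _)); have := lam_le k; have := M_le t0; lra.
move: (tanh_le1 (beta * M t)); move: (tanh _) => T hT.
rewrite !normrM ger0_norm //.
have h3 : 0 <= `|T| by [].
have h4 : 0 <= `|lam k - M t| by [].
nra.
Qed.

Lemma V_ge0 t : 0 <= t -> 0 <= V t.
Proof. by move=> t0; apply: sumr_ge0 => i _; rewrite mulr_ge0 ?hp0 ?sqr_ge0. Qed.

Lemma V_le t : 0 <= t -> V t <= 4 * Lam ^+ 2.
Proof.
move=> t0; apply: (@le_trans _ _ (\sum_(i < d) p t i * (4 * Lam ^+ 2))).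
  apply: ler_sum => i _; apply: ler_wpM2l; first exact: hp0.
  have h2 : `|lam i - M t| <= 2 * Lam.
    by apply: (le_trans (ler_normB _ _)); have := lam_le i; have := M_le t0; lra.
  rewrite -real_normK ?num_real //.
  have h4 : 0 <= `|lam i - M t| by [].
  nra.
by rewrite -mulr_suml hp1 // mul1r.
Qed.

Lemma dM_eq t : 0 <= t -> \sum_(l < d) lam l * (p t l * a l t) = 2 * th t * V t.
Proof.
move=> t0.
have e1 : \sum_(l < d) p t l * (lam l - M t) = 0.
  rewrite (eq_bigr (fun l => lam l * p t l - M t * p t l)); last by move=> l _; ring.
  by rewrite sumrB -mulr_sumr hp1 // mulr1 subrr.
rewrite (eq_bigr (fun l => 2 * th t * (lam l * (p t l * (lam l - M t))))); last first.
  by move=> l _; rewrite /a; ring.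
rewrite -mulr_sumr; congr (_ * _); rewrite /V.
rewrite [RHS](eq_bigr (fun l => lam l * (p t l * (lam l - M t)) - M t * (p t l * (lam l - M t))));
  last by move=> l _; ring.
by rewrite sumrB -mulr_sumr e1 mulr0 subr0.
Qed.


Lemma p_pos j : 0 < p 0 j -> forall t, 0 <= t -> 0 < p t j.
Proof.
move=> pj t t0.
have G := good_mul (gp j) (good_exp K).
have := good_ge0 G _ t0.
rewrite mulr0 expR0 mulr1 => H.
have {H} H : p 0 j <= p t j * expR (K * t).
  apply: H => s s0.
  have := a_le j (ltW s0); rewrite ler_norml => /andP[ha1 ha2].
  have := hp0 (ltW s0) j; have := expR_gt0 (K * s); move: (expR _) => E hE hp.
  have hpE := mulr_ge0 hp (ltW hE).
  nra.
have hE := expR_gt0 (K * t).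
have := hp0 t0 j; nra.
Qed.

Lemma p_zero k : p 0 k = 0 -> forall t, 0 <= t -> p t k = 0.
Proof.
move=> pk t t0.
have G := good_mul (gp k) (good_exp (- K)).
have := good_le0 G _ t0.
rewrite mulr0 expR0 mulr1 pk => H.
have {H} H : p t k * expR (- K * t) <= 0.
  apply: H => s s0.
  have := a_le k (ltW s0); rewrite ler_norml => /andP[ha1 ha2].
  have := hp0 (ltW s0) k; have := expR_gt0 (- K * s); move: (expR _) => E hE hp.
  have hpE := mulr_ge0 hp (ltW hE).
  nra.
have hE := expR_gt0 (- K * t).
have := hp0 t0 k; nra.
Qed.

Lemma M_zero : M 0 = 0 -> forall t, 0 <= t -> M t = 0.
Proof.
move=> M0 t t0.
pose C := 32 * beta * Lam ^+ 2.
have N := good_mul gM gM.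
have G := good_mul N (good_exp (- C)).
have := good_le0 G _ t0.
rewrite mulr0 expR0 mulr1 M0 mulr0 => H.
have {H} H : M t * M t * expR (- C * t) <= 0.
  apply: H => s s0.
  rewrite dM_eq ?(ltW s0) //.
  have hV1 := V_ge0 (ltW s0); have hV2 := V_le (ltW s0).
  have hx1 : 0 <= M s * th s.
    by have := mul_tanh_ge0 (beta * M s); rewrite /th -mulrA pmulr_rge0.
  have hx2 : M s * th s <= 2 * beta * M s ^+ 2.
    suff : beta * (M s * th s) <= beta * (2 * beta * M s ^+ 2) by rewrite ler_pM2l.
    have := mul_tanh_le (beta * M s); rewrite /th; lra.
  have hE := expR_gt0 (- C * s).
  move: (expR _) hE => E hE.
  move: (th s) (M s) (V s) hx1 hx2 hV1 hV2 => T m v hx1 hx2 hV1 hV2.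
  have hm : 0 <= beta * m ^+ 2 by rewrite mulr_ge0 ?sqr_ge0 ?ltW.
  have h1 : (m * T) * v <= 2 * beta * m ^+ 2 * (4 * Lam ^+ 2).
    apply: (le_trans (ler_wpM2r hV1 hx2)).
    by apply: ler_wpM2l => //; rewrite -mulrA mulr_ge0.
  rewrite /C; nra.
have hE := expR_gt0 (- C * t).
have : M t * M t <= 0 by nra.
move=> h; have := sqr_ge0 (M t); rewrite expr2 => h2.
have : M t * M t == 0 by rewrite eq_le h h2.
by rewrite mulf_eq0 orbb => /eqP.
Qed.

Lemma p_const : M 0 = 0 -> forall t, 0 <= t -> forall k, p t k = p 0 k.
Proof.
move=> M0 t t0 k; apply/eqP; rewrite eq_le.
have hz s : 0 < s -> p s k * a k s = 0.
  by move=> s0; rewrite /a /th M_zero ?(ltW s0) // mulr0 tanh0 mulr0 mul0r mulr0.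
rewrite (good_le0 (gp k)) ?(good_ge0 (gp k)) // => s s0; by rewrite hz.
Qed.


Lemma ratio_gen j k (hj : 0 < p 0 j) (del : R) :
  (forall s, 0 < s -> del + (a k s - a j s) <= 0) ->
  forall t, 0 <= t -> p t k / p t j * expR (del * t) <= p 0 k / p 0 j.
Proof.
move=> hdel t t0.
have hnz s : 0 <= s -> p s j != 0 by move=> s0; rewrite gt_eqF // (p_pos hj s0).
have G := good_mul (good_mul (gp k) (good_inv hnz (gp j))) (good_exp del).
have := good_le0 G _ t0; rewrite mulr0 expR0 mulr1; apply => s s0.
have pj := hnz s (ltW s0).
have -> : p s k * (p s j)^-1 * (del * expR (del * s)) +
    expR (del * s) * (p s k * (- (p s j * a j s) / p s j ^+ 2) +
    (p s j)^-1 * (p s k * a k s)) =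
    (p s k / p s j * expR (del * s)) * (del + (a k s - a j s)).
  by field.
apply: mulr_ge0_le0; last exact: hdel.
rewrite mulr_ge0 ?expR_ge0 // divr_ge0 ?hp0 ?(ltW s0) //.
Qed.


Lemma ratio_eq j k (hj : 0 < p 0 j) : lam k = lam j ->
  forall t, 0 <= t -> p t k / p t j = p 0 k / p 0 j.
Proof.
move=> hkj t t0.
have e s : a k s = a j s by rewrite /a hkj.
have ptj := p_pos hj t0.
apply/eqP; rewrite eq_le; apply/andP; split.
  have := @ratio_gen j k hj 0 _ t t0; rewrite mul0r expR0 mulr1; apply.
  by move=> s _; rewrite e subrr addr0.
have [pk0|pk0] := eqVneq (p 0 k) 0.
  by rewrite pk0 mul0r p_zero // mul0r.
have pk : 0 < p 0 k by rewrite lt_def pk0 hp0.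
have ptk := p_pos pk t0.
have H : p t j / p t k <= p 0 j / p 0 k.
  have := @ratio_gen k j pk 0 _ t t0; rewrite mul0r expR0 mulr1; apply.
  by move=> s _; rewrite e subrr addr0.
move: H; rewrite -[p t j / p t k]invf_div -[p 0 j / p 0 k]invf_div.
rewrite ler_pV2; first done.
all: by rewrite !inE /= unitfE gt_eqF ?divr_gt0.
Qed.

Section Pos.
Hypothesis hM0 : 0 < M 0.

Lemma M_ge t : 0 <= t -> M 0 <= M t.
Proof.
move=> t0.
have N := good_mul gM gM.
have HN : forall s, 0 < s -> 0 <= M s * (\sum_(l < d) lam l * (p s l * a l s)) +
     M s * (\sum_(l < d) lam l * (p s l * a l s)).
  move=> s s0.
  rewrite dM_eq ?(ltW s0) //.
  have hV1 := V_ge0 (ltW s0).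
  have hx1 : 0 <= M s * th s.
    by have := mul_tanh_ge0 (beta * M s); rewrite /th -mulrA pmulr_rge0.
  nra.
have H : M 0 * M 0 <= M t * M t by apply: (good_ge0 N HN t0).
have Mt : 0 < M t.
  rewrite ltNge; apply/negP => Mt0.
  have cM : {within `[0, t], continuous M}.
    by apply: continuous_subspaceW (good_cont gM); apply: subset_itvl.
  have hv : Num.min (M 0) (M t) <= 0 <= Num.max (M 0) (M t).
    apply/andP; split; first by rewrite ge_min Mt0 orbT.
    by rewrite le_max (ltW hM0).
  have [c c0t Mc] := IVT t0 cM hv.
  have c0 : 0 <= c by move: c0t; rewrite in_itv /= => /andP[].
  have := good_ge0 N HN c0; rewrite Mc mulr0.
  by rewrite leNgt mulr_gt0.
nra.
Qed.

Let c0 := tanh (beta * M 0).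

Lemma c0_pos : 0 < c0.
Proof. by rewrite /c0 tanh_gt0 // mulr_gt0. Qed.

Lemma th_ge t : 0 <= t -> c0 <= th t.
Proof. by move=> t0; rewrite /c0 /th tanh_mono // ler_wpM2l ?(ltW hb) ?M_ge. Qed.

Lemma decay j k : 0 < p 0 j -> lam k <= lam j -> forall t, 0 <= t ->
  p t k * expR (2 * c0 * (lam j - lam k) * t) <= p 0 k / p 0 j.
Proof.
move=> hj hkj t t0.
have H := @ratio_gen j k hj (2 * c0 * (lam j - lam k)) _ t t0.
have {H} H : p t k / p t j * expR (2 * c0 * (lam j - lam k) * t) <= p 0 k / p 0 j.
  apply: H => s s0; rewrite /a.
  have h1 := th_ge (ltW s0); have h2 : 0 <= lam j - lam k by lra.
  have -> : 2 * c0 * (lam j - lam k) + (2 * th s * (lam k - M s) - 2 * th s * (lam j - M s))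
    = 2 * (lam j - lam k) * (c0 - th s) by ring.
  by apply: mulr_ge0_le0; [rewrite mulr_ge0 | rewrite subr_le0].
apply: le_trans H; apply: ler_wpM2r; first exact: expR_ge0.
have ptj := p_pos hj t0; have ptj1 := @p_le1 t j t0; have ptk := hp0 t0 k.
by rewrite ler_pdivlMr // ler_piMr.
Qed.
Lemma case_pos :
  (forall k : 'I_d, k \notin Iplus lam (p 0) -> p t k @[t --> +oo] --> 0) /\
  (forall k : 'I_d, k \in Iplus lam (p 0) ->
     p t k @[t --> +oo] --> p 0 k / \sum_(j in Iplus lam (p 0)) p 0 j) /\
  magn lam (p t) @[t --> +oo] --> lam_plus lam (p 0).
Proof.
have : [exists j, 0 < p 0 j].
  apply: contraT; rewrite negb_exists => /forallP H.
  have : \sum_(k < d) p 0 k = 0.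
    by rewrite big1 // => k _; apply/eqP; rewrite eq_le hp0 // andbT leNgt H.
  by rewrite hp1 // => /eqP; rewrite oner_eq0.
case/existsP => j0 hj0.
have hj0' : j0 \in I0 (p 0) by rewrite inE.
have [jm hjm hmax] := exists_max lam hj0'.
have lpE := lam_plus_max hjm hmax.
have pjm : 0 < p 0 jm by move: hjm; rewrite inE.
have hA : forall k, k \notin Iplus lam (p 0) -> p t k @[t --> +oo] --> 0.
  move=> k hk.
  have [pk|pk] := boolP (0 < p 0 k).
  - have hk0 : k \in I0 (p 0) by rewrite inE.
    have hlt : lam k < lam jm.
      rewrite lt_def hmax // andbT eq_sym.
      by move: hk; rewrite inE hk0 /= lpE.
    apply: (@lim0 _ _ (p 0 k / p 0 jm) (2 * c0 * (lam jm - lam k))).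
    + by rewrite mulr_gt0 ?subr_gt0 // mulr_gt0 // c0_pos.
    + by move=> t t0; exact: hp0.
    + by move=> t t0; exact: decay pjm (ltW hlt) t t0.
  - have pk0 : p 0 k = 0 by apply/eqP; rewrite eq_le hp0 // andbT leNgt.
    apply: (@cvg_pinfty_ext _ _ (fun=> 0)); last exact: cvg_cst.
    by move=> t t0; rewrite p_zero.
pose S0 := \sum_(j in Iplus lam (p 0)) p 0 j.
have hT : (\sum_(j | j \notin Iplus lam (p 0)) p t j) @[t --> +oo] --> 0.
  have H := @cvg_big _ _ +%R 0 (fun j => j \notin Iplus lam (p 0)) add_continuous _ _
    (index_enum 'I_d) (fun j t => p t j) (fun=> 0) _ hA.
  by move: H; rewrite big1_eq; apply; typeclasses eauto.
have hB : forall k, k \in Iplus lam (p 0) -> p t k @[t --> +oo] --> p 0 k / S0.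
  move=> k hk.
  have hk0 : k \in I0 (p 0) by move: hk; rewrite inE => /andP[].
  have pk : 0 < p 0 k by move: hk0; rewrite inE.
  have lk : lam k = lam_plus lam (p 0) by move: hk; rewrite inE => /andP[_ /eqP].
  have S0pos : 0 < S0.
    rewrite /S0 (bigD1 k) //=; apply: (lt_le_trans pk); rewrite lerDl.
    by apply: sumr_ge0 => j _; apply: hp0.
  have eq : forall t, 0 <= t -> p t k =
      (1 - \sum_(j | j \notin Iplus lam (p 0)) p t j) * (p 0 k / S0).
    move=> t t0.
    have ptk := p_pos pk t0.
    have hs : \sum_(j in Iplus lam (p 0)) p t j = p t k / p 0 k * S0.
      rewrite /S0 mulr_sumr; apply: eq_bigr => j hj.
      have lj : lam j = lam k.
        by rewrite lk; move: hj; rewrite inE => /andP[_ /eqP].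
      have e := ratio_eq pk lj t0.
      have -> : p t j = p t j / p t k * p t k by rewrite divfK // gt_eqF.
      rewrite e; ring.
    have hsplit : \sum_(j in Iplus lam (p 0)) p t j +
        \sum_(j | j \notin Iplus lam (p 0)) p t j = 1.
      by rewrite -(hp1 t0) [RHS](bigID (fun j => j \in Iplus lam (p 0))) /=.
    rewrite -hsplit addrK hs.
    field; rewrite ?gt_eqF //.
  apply: (cvg_pinfty_ext eq).
  have := cvgM (cvgB (cvg_cst (1 : R)) hT) (cvg_cst (p 0 k / S0)).
  by rewrite subr0 mul1r => H; apply: H; typeclasses eauto.
split; first exact: hA.
split; first exact: hB.
pose L l := if l \in Iplus lam (p 0) then p 0 l / S0 else 0.
have hL : forall l, p t l @[t --> +oo] --> L l.
  by move=> l; rewrite /L; case: ifPn => hl; [exact: hB | exact: hA].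
have H := @cvg_big _ _ +%R 0 xpredT add_continuous _ _ (index_enum 'I_d)
  (fun l t => lam l * p t l) (fun l => lam l * L l) _
  (fun l _ => cvgM (cvg_cst (lam l)) (hL l)).
suff E : \sum_(l < d) lam l * L l = lam_plus lam (p 0) by rewrite -E; exact: H.
have S0pos : 0 < S0.
  rewrite /S0 (bigD1 jm) //=; last by rewrite inE hjm lpE eqxx.
  apply: (lt_le_trans pjm); rewrite lerDl.
  by apply: sumr_ge0 => j _; apply: hp0.
rewrite (bigID (fun l => l \in Iplus lam (p 0))) /= [X in _ + X]big1 ?addr0; last first.
  by move=> l /negbTE hl; rewrite /L hl mulr0.
rewrite (eq_bigr (fun l => lam_plus lam (p 0) * (p 0 l / S0))); last first.
  move=> l hl; rewrite /L hl; congr (_ * _).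
  by move: hl; rewrite inE => /andP[_ /eqP].
by rewrite -mulr_sumr -mulr_suml divff ?mulr1 // gt_eqF.
Qed.
End Pos.
End Main.

Unset Implicit Arguments.

Theorem proposition4p5 (R : realType) (d : nat) (beta : R)
  (lam : 'I_d -> R) (p : R -> 'I_d -> R) :
  0 < beta ->
  (* p(t) is a probability vector for all t >= 0 *)
  (forall t : R, 0 <= t -> forall k : 'I_d, 0 <= p t k) ->
  (forall t : R, 0 <= t -> \sum_(k < d) p t k = 1) ->
  (* p is a solution on [0, +oo): continuous at 0 from the right, and
     satisfies the ODE at every t > 0 *)
  (forall k : 'I_d, p s k @[s --> 0^'+] --> p 0 k) ->
  (forall t : R, 0 < t -> forall k : 'I_d,
     is_derive t 1 (fun s => p s k)
       (2 * p t k * tanh (beta * magn lam (p t)) * (lam k - magn lam (p t)))) ->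
  (* (1) *)
  (0 < magn lam (p 0) ->
     (forall k : 'I_d, k \notin Iplus lam (p 0) -> p t k @[t --> +oo] --> 0) /\
     (forall k : 'I_d, k \in Iplus lam (p 0) ->
        p t k @[t --> +oo] --> p 0 k / \sum_(j in Iplus lam (p 0)) p 0 j) /\
     magn lam (p t) @[t --> +oo] --> lam_plus lam (p 0)) /\
  (* (2) *)
  (magn lam (p 0) < 0 ->
     (forall k : 'I_d, k \notin Iminus lam (p 0) -> p t k @[t --> +oo] --> 0) /\
     (forall k : 'I_d, k \in Iminus lam (p 0) ->
        p t k @[t --> +oo] --> p 0 k / \sum_(j in Iminus lam (p 0)) p 0 j) /\
     magn lam (p t) @[t --> +oo] --> lam_minus lam (p 0)) /\
  (* (3) *)
  (magn lam (p 0) = 0 -> forall t : R, 0 <= t -> forall k : 'I_d, p t k = p 0 k).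
Proof.
move=> hb hp0 hp1 hc hd.
split; first by move=> hM0; exact: (@case_pos R d beta lam p hb hp0 hp1 hc hd hM0).
split; last first.
  by move=> hM0 t t0 k; exact: (@p_const R d beta lam p hb hp0 hp1 hc hd hM0 t t0 k).
move=> hM0.
pose lam' := fun k => - lam k.
have hd' : forall t : R, 0 < t -> forall k : 'I_d,
     is_derive t 1 (fun s => p s k)
       (2 * p t k * tanh (beta * magn lam' (p t)) * (lam' k - magn lam' (p t))).
  move=> t t0 k; apply: (is_derive_eq (hd t t0 k)).
  by rewrite /lam' magnN mulrN tanhN; ring.
have hM0' : 0 < magn lam' (p 0) by rewrite magnN oppr_gt0.
have [h1 [h2 h3]] := @case_pos R d beta lam' p hb hp0 hp1 hc hd' hM0'.
rewrite Iminus_plus lam_minus_plus.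
split; first exact: h1.
split; first exact: h2.
apply: (@cvg_pinfty_ext _ _ (fun t => - magn lam' (p t))).
  by move=> t _; rewrite magnN opprK.
exact: cvgN.
Qed.
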